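(* For every partition $\bar A=\{A_i\}$ with $A_i\in(P_i,Q_i)$ and every $i$, $f_{\bar A}^2(P_i)=P_i$ and $f_{\bar A}^2(Q_i)=Q_i$. In addition, $f_{\bar A}(P_i)=P_i$ if $i\in\{1,2g,4g-1,6g-2\}$, and $f_{\bar A}(Q_i)=Q_i$ if $i\in\{2,2g+1,4g,6g-1\}$.
   Context: Setting. Fix $g\ge 2$; indices are mod $8g-4$. Let $\mathcal F$ be the regular hyperbolic $(8g-4)$-gon in the unit disk centered at $0$ with all interior angles $\pi/2$, sides labeled $1,\dots,8g-4$ counterclockwise, side $i$ joining vertices $V_i$ and $V_{i+1}$. The complete geodesic extending side $i$ goes from $P_i$ (beyond $V_i$) to $Q_{i+1}$ (beyond $V_{i+1}$) on the unit circle $\mathbb S$; counterclockwise order $P_1,Q_1,P_2,Q_2,\dots,P_{8g-4},Q_{8g-4}$. $\sigma(i)=4g-i$ ($i$ odd), $\sigma(i)=2-i$ ($i$ even). $T_i$ is the Möbius transformation mapping side $i$ onto side $\sigma(i)$, with isometric circle the geodesic $P_iQ_{i+1}$, mapped onto the geodesic $Q_{\sigma(i)+1}P_{\sigma(i)}$, inside to outside; $T_{\sigma(i)}T_i=\mathrm{Id}$. Arcs $[A,B)$, $(A,B)$ are counterclockwise from $A$ to $B$. For a partition $\bar A$ with $A_i\in(P_i,Q_i)$, $f_{\bar A}(x)=T_i(x)$ if $x\in[A_i,A_{i+1})$. *)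

(* Defs.v *)
From mathcomp Require Import all_boot all_order all_algebra.
From mathcomp Require Export complex.
From mathcomp Require Export reals trigo.
Import Order.TTheory GRing.Theory Num.Theory.
Set Implicit Arguments. Unset Strict Implicit. Unset Printing Implicit Defensive.
Local Open Scope ring_scope.
Local Open Scope complex_scope.

Section Setting.
Variable R : realType.

Definition cre (z : R[i]) : R := let: a +i* _ := z in a.
Definition cim (z : R[i]) : R := let: _ +i* b := z in b.

Definition expi (t : R) : R[i] := cos t +i* sin t.

Definition on_S (z : R[i]) : Prop := cre z ^+ 2 + cim z ^+ 2 = 1.

Definition Nsides (g : nat) : nat := (8 * g - 4)%N.

(* The regular N-gon F is centered at 0 and rotated by an arbitrary phase
   alpha: vertex V_k is at angle alpha + 2 pi k / N, so side k (from V_k to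
   V_{k+1}) has its midpoint direction at angle sideang k below.
   Indices are integers; everything is N-periodic in the index. *)
Definition sideang (g : nat) (alpha : R) (k : int) : R :=
  alpha + pi * (2 * k + 1)%:~R / (Nsides g)%:R.

(* The geodesic extending side k is the circle C_k orthogonal to S with
   center kappa * e^{i sideang k} and radius rho, kappa^2 = 1 + rho^2.
   Adjacent geodesics C_{k-1}, C_k (centers 2 pi / N apart) meet at right
   angles (interior angles pi/2), i.e. |c_{k-1} - c_k|^2 = 2 rho^2, which
   gives kappa^2 = 1 / cos (2 pi / N). *)
Definition kappa (g : nat) : R := (Num.sqrt (cos (2 * pi / (Nsides g)%:R)))^-1.
Definition rho (g : nat) : R := Num.sqrt (kappa g ^+ 2 - 1).
Definition geocenter (g : nat) (alpha : R) (k : int) : R[i] :=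
  (kappa g)%:C * expi (sideang g alpha k).

(* Angular half-width of the geodesic C_k seen from 0: cos beta = 1/kappa. *)
Definition halfw (g : nat) : R := acos (Num.sqrt (cos (2 * pi / (Nsides g)%:R))).

(* Endpoints of the geodesic extending side k: P_k (beyond V_k) and
   Q_{k+1} (beyond V_{k+1}). Hence Q_k is the endpoint of C_{k-1}. *)
Definition Pt (g : nat) (alpha : R) (k : int) : R[i] :=
  expi (sideang g alpha k - halfw g).
Definition Qt (g : nat) (alpha : R) (k : int) : R[i] :=
  expi (sideang g alpha (k - 1) + halfw g).

Definition sigma (g : nat) (k : int) : int :=
  if odd `|k|%N then (4 * g)%:Z - k else 2 - k.

(* T_k = (reflection in the line through 0 mapping C_k onto C_{sigma k})
         o (inversion in the circle C_k).
   Inversion in C_k: z |-> c + rho^2 / conj(z - c); reflection in the line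
   at angle psi: z |-> e^{2 i psi} conj z.  The composite is the Moebius map
   z |-> e^{2 i psi} (conj c + rho^2 / (z - c)); it preserves the unit disk,
   has isometric circle C_k, maps C_k onto C_{sigma k} (P_k |-> Q_{sigma k+1},
   Q_{k+1} |-> P_{sigma k}), inside to outside, and T_{sigma k} T_k = Id. *)
Definition Tmap (g : nat) (alpha : R) (k : int) (z : R[i]) : R[i] :=
  let c := geocenter g alpha k in
  let psi := (sideang g alpha k + sideang g alpha (sigma g k)) / 2 in
  expi (2 * psi) * ((c^*)%C + ((rho g) ^+ 2)%:C / (z - c)).

(* Signed (doubled) area of triangle (a, x, b); for distinct points of S it
   is > 0 iff a, x, b are in counterclockwise cyclic order. *)
Definition orient (a x b : R[i]) : R := cim (((x - a)^*)%C * (b - a)).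

Definition in_arc_oo (a b x : R[i]) : bool := 0 < orient a x b.
Definition in_arc_co (a b x : R[i]) : bool := (x == a) || in_arc_oo a b x.

Definition fA (g : nat) (alpha : R) (A : int -> R[i]) (x : R[i]) : R[i] :=
  match [pick j : 'I_(Nsides g) |
           in_arc_co (A (nat_of_ord j)%:Z) (A ((nat_of_ord j)%:Z + 1)) x] with
  | Some j => Tmap g alpha (nat_of_ord j)%:Z x
  | None => x
  end.

Definition is_partition (g : nat) (alpha : R) (A : int -> R[i]) : Prop :=
  (forall k : int, A (k + (Nsides g)%:Z) = A k) /\
  (forall k : int, on_S (A k) /\ in_arc_oo (Pt g alpha k) (Qt g alpha k) (A k)).

End Setting.

(* Main.v *)
Require Import Defs.
From mathcomp Require Import all_boot all_order all_algebra.
From mathcomp Require Import complex reals trigo.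
From mathcomp Require Import ring lra zify.
Import Order.TTheory GRing.Theory Num.Theory.
Open Scope complex_scope.
Open Scope ring_scope.
Local Open Scope ring_scope.


Section S.
Variable R : realType.
Implicit Types a b x t u w : R.

Lemma cplx_mul (a b c d : R) : (a +i* b) * (c +i* d) = (a*c - b*d) +i* (a*d + b*c).
Proof. by []. Qed.
Lemma cplx_add (a b c d : R) : (a +i* b) + (c +i* d) = (a+c) +i* (b+d).
Proof. by []. Qed.
Lemma cplx_opp (a b : R) : - (a +i* b) = (-a) +i* (-b).
Proof. by []. Qed.
Lemma cplx_conj (a b : R) : ((a +i* b)^*)%C = a +i* (-b).
Proof. by []. Qed.
Lemma cplx_C (a : R) : a%:C = a +i* 0.
Proof. by []. Qed.

Lemma expiM a b : expi a * expi b = expi (a + b) :> R[i].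
Proof. rewrite /expi cplx_mul sinD cosD. congr (_ +i* _); ring. Qed.

Lemma expi0 : expi 0 = 1 :> R[i].
Proof. by rewrite /expi cos0 sin0. Qed.

Lemma expiJ a : ((expi a)^*)%C = expi (- a) :> R[i].
Proof. by rewrite /expi cplx_conj cosN sinN. Qed.

Lemma orientE a x b :
  orient (expi a) (expi x) (expi b) = sin (b - x) + sin (x - a) - sin (b - a).
Proof.
rewrite /orient /expi !cplx_opp !cplx_add cplx_conj cplx_mul /cim.
rewrite !sinB; ring.
Qed.

Lemma sin3 u w : sin (w + w) + sin (u + u) - sin ((u + u) + (w + w)) =
  4 * sin u * sin w * sin (u + w).
Proof.
rewrite !sinD !cosD.
have h1 := cos2Dsin2 u. have h2 := cos2Dsin2 w.
apply/eqP; rewrite -subr_eq0; apply/eqP.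
transitivity (2 * sin w * cos w * (1 - (cos u ^+ 2 + sin u ^+ 2)) +
              2 * sin u * cos u * (1 - (cos w ^+ 2 + sin w ^+ 2))); first ring.
by rewrite h1 h2 subrr; ring.
Qed.


Lemma sin_lt0 w : - pi < w -> w < 0 -> sin w < 0.
Proof.
move=> h1 h2; have : 0 < sin (- w) by apply: sin_gt0_pi; apply/andP; split; lra.
rewrite sinN; lra.
Qed.

Lemma sin_le0 w : - pi < w -> w <= 0 -> sin w <= 0.
Proof.
move=> h1 h2; have : 0 <= sin (- w) by apply: sin_ge0_pi; apply/andP; split; lra.
rewrite sinN; lra.
Qed.

Lemma orient3 a x b : orient (expi a) (expi x) (expi b) =
  4 * sin ((x - a) / 2) * sin ((b - x) / 2) * sin ((b - a) / 2).
Proof.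
have -> : (b - a) / 2 = (x - a) / 2 + (b - x) / 2 by lra.
rewrite orientE -sin3; congr (sin _ + sin _ - sin _); lra.
Qed.

Lemma arc_pos a x b : a < x -> x < b -> b < a + 2 * pi ->
  0 < orient (expi a) (expi x) (expi b).
Proof.
move=> h1 h2 h3; rewrite orient3.
have p1 : 0 < sin ((x - a) / 2) by apply: sin_gt0_pi; apply/andP; split; lra.
have p2 : 0 < sin ((b - x) / 2) by apply: sin_gt0_pi; apply/andP; split; lra.
have p3 : 0 < sin ((b - a) / 2) by apply: sin_gt0_pi; apply/andP; split; lra.
by rewrite !mulr_gt0.
Qed.

Lemma arc_nonpos a x b : a < b -> b <= x -> x < a + 2 * pi ->
  orient (expi a) (expi x) (expi b) <= 0.
Proof.
move=> h1 h2 h3; rewrite orient3.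
have p1 : 0 < sin ((x - a) / 2) by apply: sin_gt0_pi; apply/andP; split; lra.
have p2 : sin ((b - x) / 2) <= 0 by apply: sin_le0; lra.
have p3 : 0 < sin ((b - a) / 2) by apply: sin_gt0_pi; apply/andP; split; lra.
have p4 : 0 < 4 * sin ((x - a) / 2) * sin ((b - a) / 2) by rewrite !mulr_gt0.
have -> : 4 * sin ((x - a) / 2) * sin ((b - x) / 2) * sin ((b - a) / 2) =
  (4 * sin ((x - a) / 2) * sin ((b - a) / 2)) * sin ((b - x) / 2) by ring.
by rewrite pmulr_rle0.
Qed.

Lemma orient_same1 (p y : R[i]) : orient p y p = 0.
Proof. by rewrite /orient subrr mulr0. Qed.
Lemma orient_same2 (p y : R[i]) : orient p p y = 0.
Proof. by rewrite /orient subrr rmorph0 mul0r. Qed.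

Lemma arc_ne a x : a < x -> x < a + 2 * pi -> expi x <> expi a.
Proof.
move=> h1 h2 he.
have h : 0 < orient (expi a) (expi ((a + x) / 2)) (expi x) by apply: arc_pos; lra.
by move: h; rewrite he orient_same1 ltxx.
Qed.

Lemma arc_co a b x : a < b -> b < a + 2 * pi -> a <= x -> x < a + 2 * pi ->
  in_arc_co (expi a) (expi b) (expi x) -> x < b.
Proof.
move=> h1 h2 h3 h4; rewrite /in_arc_co /in_arc_oo.
case: (ltP x b) => // hbx /orP [/eqP h | h].
  by exfalso; apply: (@arc_ne a x) => //; lra.
by have := @arc_nonpos a x b h1 hbx h4; lra.
Qed.

Lemma arc_oo a b x : a < b -> b < a + 2 * pi -> a <= x -> x < a + 2 * pi ->
  in_arc_oo (expi a) (expi b) (expi x) -> a < x /\ x < b.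
Proof.
move=> h1 h2 h3 h4; rewrite /in_arc_oo => h.
case: (ltP x b) => hbx; last by have := @arc_nonpos a x b h1 hbx h4; lra.
split => //; rewrite lt_neqAle h3 andbT; apply/eqP => e.
by move: h; rewrite -e orient_same2 ltxx.
Qed.

Lemma expi_pern t (n : nat) : expi (t + 2 * pi * n%:R) = expi t.
Proof.
have -> : 2 * pi * n%:R = (pi *+ 2) *+ n :> R by rewrite -mulr_natr; ring.
by rewrite /expi (periodicn (@cosD2pi R)) (periodicn (@sinD2pi R)).
Qed.

Lemma expi_per t (m : int) : expi (t + 2 * pi * m%:~R) = expi t.
Proof.
case: m => n; first exact: expi_pern.
rewrite NegzE -(@expi_pern (t + 2 * pi * (- (n.+1)%:Z)%:~R) n.+1).
congr expi; rewrite mulrNz; ring.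
Qed.

Lemma onS_expi z : on_S z -> exists t, z = expi t.
Proof.
case: z => a b; rewrite /on_S /= => h.
have ha : a \in `[(-1), 1] by rewrite in_itv /=; apply/andP; split; nra.
have hs : Num.sqrt (1 - a ^+ 2) = `|b| by rewrite -sqrtr_sqr; congr Num.sqrt; lra.
case: (lerP 0 b) => hb.
  exists (acos a); rewrite /expi acosK // sin_acos; last by rewrite in_itv /= in ha.
  by rewrite hs ger0_norm.
exists (- acos a); rewrite /expi cosN sinN acosK // sin_acos; last by rewrite in_itv /= in ha.
by rewrite hs ltr0_norm // opprK.
Qed.

Lemma shift_win t w : exists m : int,
  w <= t + 2 * pi * m%:~R /\ t + 2 * pi * m%:~R < w + 2 * pi.
Proof.
have pp : 0 < 2 * pi :> R by rewrite mulr_gt0 // pi_gt0.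
set y := (t - w) / (2 * pi).
exists (- Num.floor y).
have h1 := floor_le y. have h2 := floorD1_gt y.
rewrite intrD in h2. rewrite mulrNz.
have e : 2 * pi * y = t - w by rewrite /y mulrC divfK // gt_eqF.
split; nra.
Qed.

Lemma conj_kexpi (k a : R) : ((k%:C * expi a)^*)%C = k%:C * expi (- a).
Proof. rewrite /expi !cplx_C !cplx_mul cplx_conj cosN sinN; congr (_ +i* _); ring. Qed.

Lemma core (d b k : R) : k * cos d = cos b ->
  (expi (- d - b) - k%:C) * (expi (d - b) - k%:C) = (k ^+ 2 - 1)%:C.
Proof.
move=> hk.
rewrite /expi !cplx_C !cplx_opp !cplx_add cplx_mul !cosD !sinD !cosN !sinN.
have h1 := cos2Dsin2 d. have h2 := cos2Dsin2 b.
congr (_ +i* _).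
  apply/eqP; rewrite -subr_eq0; apply/eqP.
  transitivity ((cos d ^+ 2 + sin d ^+ 2 - 1) * (cos b ^+ 2 - sin b ^+ 2)
     - 2 * cos b * (k * cos d - cos b) - (cos b ^+ 2 + sin b ^+ 2 - 1)); first ring.
  by rewrite h1 h2 hk !subrr; ring.
apply/eqP; rewrite -subr_eq0; apply/eqP.
transitivity (- 2 * cos b * sin b * (cos d ^+ 2 + sin d ^+ 2 - 1)
   + 2 * sin b * (k * cos d - cos b)); first ring.
by rewrite h1 hk !subrr; ring.
Qed.

Lemma mob_gen (k r s1 s2 zt tt : R) : 1 < k ^+ 2 -> r ^+ 2 = k ^+ 2 - 1 ->
  (expi (- (s1 + s2)) * expi tt - ((k%:C * expi s1)^*)%C) * (expi zt - k%:C * expi s1)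
    = (r ^+ 2)%:C ->
  expi (s1 + s2) * (((k%:C * expi s1)^*)%C + (r ^+ 2)%:C / (expi zt - k%:C * expi s1))
    = expi tt.
Proof.
move=> hk hr H.
have hz : expi zt - k%:C * expi s1 != 0.
  apply/eqP => /eqP; rewrite subr_eq0 /expi cplx_C cplx_mul => /eqP [e1 e2].
  have := cos2Dsin2 zt; have := cos2Dsin2 s1; rewrite e1 e2; nra.
rewrite -H mulfK // (addrC ((k%:C * expi s1)^*)%C) subrK mulrA expiM addrN expi0 mul1r //.
Qed.

Lemma mob_P (k r s1 s2 d b : R) : 1 < k ^+ 2 -> r ^+ 2 = k ^+ 2 - 1 ->
  k * cos d = cos b ->
  expi (s1 + s2) * (((k%:C * expi s1)^*)%C + (r ^+ 2)%:C / (expi (s1 + d - b) - k%:C * expi s1))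
    = expi (s2 - d - b).
Proof.
move=> hk hr hc; apply: mob_gen => //.
rewrite conj_kexpi.
have -> : expi (- (s1 + s2)) * expi (s2 - d - b) = expi (- s1) * expi (- d - b).
  by rewrite !expiM; congr expi; ring.
have -> : expi (s1 + d - b) = expi s1 * expi (d - b) by rewrite expiM; congr expi; ring.
transitivity ((expi (- s1) * expi s1) * ((expi (- d - b) - k%:C) * (expi (d - b) - k%:C))).
  ring.
by rewrite expiM addNr expi0 mul1r core // hr.
Qed.

Lemma mob_Q (k r s1 s2 d b : R) : 1 < k ^+ 2 -> r ^+ 2 = k ^+ 2 - 1 ->
  k * cos d = cos b ->
  expi (s1 + s2) * (((k%:C * expi s1)^*)%C + (r ^+ 2)%:C / (expi (s1 - d + b) - k%:C * expi s1))
    = expi (s2 + d + b).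
Proof.
move=> hk hr hc; apply: mob_gen => //.
rewrite conj_kexpi.
have -> : expi (- (s1 + s2)) * expi (s2 + d + b) = expi (- s1) * expi (d - - b).
  by rewrite !expiM; congr expi; ring.
have -> : expi (s1 - d + b) = expi s1 * expi (- d - - b) by rewrite expiM; congr expi; ring.
transitivity ((expi (- s1) * expi s1) * ((expi (- d - - b) - k%:C) * (expi (d - - b) - k%:C))).
  ring.
by rewrite expiM addNr expi0 mul1r core ?cosN // hr.
Qed.

End S.

Section Geo.
Variable R : realType.
Variable g : nat.
Hypothesis hg : (2 <= g)%N.
Variable alpha : R.

Local Notation N := (Nsides g).
Local Notation Nr := ((Nsides g)%:R : R).
Local Notation delta := (2 * pi / (Nsides g)%:R : R).
Local Notation s := (sideang g alpha).
Local Notation beta := (halfw R g).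

Lemma N_ge12 : (12 <= N)%N.
Proof. rewrite /Nsides; lia. Qed.

Lemma Nr_ge12 : 12 <= Nr.
Proof. by have := N_ge12; rewrite -(ler_nat R). Qed.

Lemma Nr_gt0 : 0 < Nr.
Proof. have := Nr_ge12; lra. Qed.

Lemma deltaNr : delta * Nr = 2 * pi.
Proof. by rewrite divfK // gt_eqF // Nr_gt0. Qed.

Lemma delta_gt0 : 0 < delta.
Proof. by rewrite divr_gt0 ?Nr_gt0 // mulr_gt0 // pi_gt0. Qed.

Lemma delta_small : delta * 6 <= pi.
Proof.
have h1 := deltaNr. have h2 := Nr_ge12. have h3 := delta_gt0. nra.
Qed.

Lemma pi_gt0' : 0 < pi :> R. Proof. exact: pi_gt0. Qed.

Lemma c0_gt0 : 0 < cos delta.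
Proof.
have h1 := delta_small. have h3 := delta_gt0. have := pi_gt0'.
move=> hp; apply: cos_gt0_pihalf; apply/andP; split; lra.
Qed.

Lemma c0_lt1 : cos delta < 1.
Proof.
have h1 := delta_small. have h3 := delta_gt0. have hp := pi_gt0'.
rewrite -[X in _ < X](@cos0 R) ltr_cos // in_itv /=; apply/andP; split; lra.
Qed.

Lemma cb_def : cos beta = Num.sqrt (cos delta).
Proof.
have h0 := c0_gt0. have h1 := c0_lt1.
have hs : Num.sqrt (cos delta) ^+ 2 = cos delta by rewrite sqr_sqrtr // ltW.
have hs0 := sqrtr_ge0 (cos delta).
rewrite /halfw acosK // in_itv /=; apply/andP; split; nra.
Qed.

Lemma cb_gt0 : 0 < cos beta.
Proof. by rewrite cb_def sqrtr_gt0 c0_gt0. Qed.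

Lemma cb_sq : cos beta ^+ 2 = cos delta.
Proof. by rewrite cb_def sqr_sqrtr // ltW // c0_gt0. Qed.

Lemma cb_lt1 : cos beta < 1.
Proof. have := cb_sq; have := c0_lt1; have := cb_gt0; nra. Qed.

Lemma beta_range : 0 <= beta <= pi.
Proof.
have h0 := c0_gt0. have h1 := c0_lt1.
have hs : Num.sqrt (cos delta) ^+ 2 = cos delta by rewrite sqr_sqrtr // ltW.
have hs0 := sqrtr_ge0 (cos delta).
have hi : -1 <= Num.sqrt (cos delta) <= 1 by apply/andP; split; nra.
by rewrite /halfw acos_ge0 // acos_lepi.
Qed.

Lemma beta_lt_delta : beta < delta.
Proof.
have h1 := delta_small. have h3 := delta_gt0. have hp := pi_gt0'.
have /andP [b0 b1] := beta_range.
rewrite -ltr_cos ?in_itv /=; last by apply/andP; split; lra.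
  by rewrite -cb_sq; have := cb_gt0; have := cb_lt1; nra.
by apply/andP; split.
Qed.

Lemma beta_gt_halfdelta : delta / 2 < beta.
Proof.
have h1 := delta_small. have h3 := delta_gt0. have hp := pi_gt0'.
have /andP [b0 b1] := beta_range.
rewrite -ltr_cos ?in_itv /=; last by apply/andP; split; lra.
  have hh : 0 < cos (delta / 2) by apply: cos_gt0_pihalf; apply/andP; split; lra.
  have e : cos delta = cos (delta / 2) ^+ 2 * 2 - 1.
    rewrite [in LHS](splitr delta) cosD.
    have := cos2Dsin2 (delta / 2); lra.
  have := cb_sq; have := cb_gt0; have := c0_lt1; nra.
all: by apply/andP; split; lra.
Qed.

Lemma kappa_cb : kappa R g * cos beta = 1.
Proof. by rewrite /kappa -cb_def mulVf // gt_eqF // cb_gt0. Qed.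

Lemma kappa_c0 : kappa R g * cos delta = cos beta.
Proof. rewrite -cb_sq expr2 mulrA kappa_cb; ring. Qed.

Lemma kappa_sq_gt1 : 1 < kappa R g ^+ 2.
Proof. have := kappa_cb; have := cb_gt0; have := cb_lt1; nra. Qed.

Lemma rho_sq : rho R g ^+ 2 = kappa R g ^+ 2 - 1.
Proof. by rewrite /rho sqr_sqrtr // subr_ge0 ltW // kappa_sq_gt1. Qed.

Lemma sideangD k m : s (k + m) = s k + delta * m%:~R.
Proof. rewrite /sideang; ring. Qed.

Lemma sideang_per k m : s (k + m * (N%:Z)) = s k + 2 * pi * m%:~R.
Proof.
rewrite sideangD intrM (_ : ((N%:Z)%:~R : R) = Nr) //.
have := Nr_gt0; move=> hN; field; rewrite gt_eqF //.
Qed.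

Lemma Pt_per k m : Pt g alpha (k + m * N%:Z) = Pt g alpha k.
Proof.
rewrite /Pt sideang_per -[in RHS](@expi_per R _ m); congr expi; ring.
Qed.

Lemma Qt_per k m : Qt g alpha (k + m * N%:Z) = Qt g alpha k.
Proof.
rewrite /Qt (_ : k + m * N%:Z - 1 = (k - 1) + m * N%:Z); last by ring.
rewrite sideang_per -[in RHS](@expi_per R _ m); congr expi; ring.
Qed.

Lemma sigma_N k : sigma g (k + N%:Z) = sigma g k - N%:Z.
Proof.
rewrite /sigma (_ : odd (absz (k + N%:Z)) = odd (absz k)); last by rewrite /Nsides; lia.
case: ifP => _; ring.
Qed.

Lemma Tmap_N k z : Tmap g alpha (k + N%:Z) z = Tmap g alpha k z.
Proof.
rewrite /Tmap /geocenter sigma_N.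
have e1 : s (k + N%:Z) = s k + 2 * pi * (1%:Z)%:~R by rewrite -sideang_per mul1r.
have e2 : s (sigma g k - N%:Z) = s (sigma g k) - 2 * pi * (1%:Z)%:~R.
  by have := sideang_per (sigma g k) (-1); rewrite mulN1r => ->; ring.
rewrite e1 e2 expi_per; congr (expi _ * _); ring.
Qed.

Lemma int_per (T : Type) (f : int -> T) :
  (forall k, f (k + N%:Z) = f k) -> forall k m, f (k + m * N%:Z) = f k.
Proof.
move=> H.
have Hp : forall k (n : nat), f (k + n%:Z * N%:Z) = f k.
  move=> k; elim=> [|n IH]; first by rewrite mul0r addr0.
  by rewrite -[in RHS]IH -[in RHS]H; congr f; rewrite intS; ring.
move=> k [n|n]; first exact: Hp.
rewrite -(Hp (k + Negz n * N%:Z) n.+1); congr f; rewrite NegzE; ring.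
Qed.

Lemma Tmap_P j : Tmap g alpha j (Pt g alpha (j + 1)) = Pt g alpha (sigma g j - 1).
Proof.
rewrite /Tmap /geocenter /Pt.
rewrite (_ : 2 * ((s j + s (sigma g j)) / 2) = s j + s (sigma g j)); last by lra.
rewrite sideangD (sideangD (sigma g j) (-1)).
rewrite (_ : s j + delta * 1%:~R - beta = s j + delta - beta); last by ring.
rewrite (_ : s (sigma g j) + delta * (-1)%:~R - beta = s (sigma g j) - delta - beta); last by ring.
apply: mob_P; [exact: kappa_sq_gt1 | exact: rho_sq | exact: kappa_c0].
Qed.

Lemma Tmap_Q j : Tmap g alpha j (Qt g alpha j) = Qt g alpha (sigma g j + 2).
Proof.
rewrite /Tmap /geocenter /Qt.
rewrite (_ : 2 * ((s j + s (sigma g j)) / 2) = s j + s (sigma g j)); last by lra.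
rewrite (sideangD j (-1)) (_ : sigma g j + 2 - 1 = sigma g j + 1); last by ring.
rewrite sideangD.
rewrite (_ : s j + delta * (-1)%:~R + beta = s j - delta + beta); last by ring.
rewrite (_ : s (sigma g j) + delta * 1%:~R + beta = s (sigma g j) + delta + beta); last by ring.
apply: mob_Q; [exact: kappa_sq_gt1 | exact: rho_sq | exact: kappa_c0].
Qed.

Lemma s_pred k : s (k - 1) = s k - delta.
Proof. by rewrite sideangD; ring. Qed.
Lemma s_succ k : s (k + 1) = s k + delta.
Proof. by rewrite sideangD; ring. Qed.

Lemma sigma_odd k : odd (absz k) -> sigma g k = (4 * g)%:Z - k.
Proof. by rewrite /sigma => ->. Qed.
Lemma sigma_even k : ~~ odd (absz k) -> sigma g k = 2 - k.
Proof. by rewrite /sigma => /negbTE ->. Qed.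

Lemma sigma2P k : sigma g (sigma g (k - 1) - 1 - 1) - 1 = k.
Proof.
case: (boolP (odd (absz (k - 1)))) => h;
  [rewrite (sigma_odd _ h) sigma_odd | rewrite (sigma_even _ h) sigma_even]; lia.
Qed.

Lemma sigma2Q k : sigma g (sigma g k + 2) + 2 = k.
Proof.
case: (boolP (odd (absz k))) => h;
  [rewrite (sigma_odd _ h) sigma_odd | rewrite (sigma_even _ h) sigma_even]; lia.
Qed.

Lemma fixP k : (k %% N%:Z)%Z \in [:: 1%Z; (2 * g)%:Z; (4 * g - 1)%:Z; (6 * g - 2)%:Z] ->
  exists m, sigma g (k - 1) - 1 = k + m * N%:Z.
Proof.
have eN : N%:Z = 2 * (4 * g - 2)%N%:Z by rewrite /Nsides; lia.
have [q [P hP]] : exists q P, q * N%:Z = P /\ k = P + (k %% N%:Z)%Z.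
  by exists (k %/ N%:Z)%Z, ((k %/ N%:Z)%Z * N%:Z); split => //; rewrite {1}(divz_eq k N%:Z).
case: hP => hq hk.
have ho : forall x, odd (absz (P + x)) = odd (absz x).
  move=> x; rewrite -hq eN mulrCA; generalize (q * (4 * g - 2)%N%:Z) => y; lia.
rewrite !inE => /or4P [] /eqP hr; rewrite hr in hk; rewrite hk.
- rewrite sigma_even; last by rewrite -addrA ho.
  exists (-2 * q); rewrite -mulrA hq; lia.
- rewrite sigma_odd; last by rewrite -addrA ho; lia.
  exists (-2 * q); rewrite -mulrA hq; lia.
- rewrite sigma_even; last by rewrite -addrA ho; lia.
  exists (-2 * q - 1); rewrite mulrBl -mulrA hq; lia.
- rewrite sigma_odd; last by rewrite -addrA ho; lia.
  exists (-2 * q - 1); rewrite mulrBl -mulrA hq; lia.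
Qed.
Lemma fixQ k : (k %% N%:Z)%Z \in [:: 2%Z; (2 * g + 1)%:Z; (4 * g)%:Z; (6 * g - 1)%:Z] ->
  exists m, sigma g k + 2 = k + m * N%:Z.
Proof.
have eN : N%:Z = 2 * (4 * g - 2)%N%:Z by rewrite /Nsides; lia.
have [q [P hP]] : exists q P, q * N%:Z = P /\ k = P + (k %% N%:Z)%Z.
  by exists (k %/ N%:Z)%Z, ((k %/ N%:Z)%Z * N%:Z); split => //; rewrite {1}(divz_eq k N%:Z).
case: hP => hq hk.
have ho : forall x, odd (absz (P + x)) = odd (absz x).
  move=> x; rewrite -hq eN mulrCA; generalize (q * (4 * g - 2)%N%:Z) => y; lia.
rewrite !inE => /or4P [] /eqP hr; rewrite hr in hk; rewrite hk.
- rewrite sigma_even; last by rewrite ho.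
  exists (-2 * q); rewrite -mulrA hq; lia.
- rewrite sigma_odd; last by rewrite ho; lia.
  exists (-2 * q); rewrite -mulrA hq; lia.
- rewrite sigma_even; last by rewrite ho; lia.
  exists (-2 * q - 1); rewrite mulrBl -mulrA hq; lia.
- rewrite sigma_odd; last by rewrite ho; lia.
  exists (-2 * q - 1); rewrite mulrBl -mulrA hq; lia.
Qed.

Section Part.
Variable A : int -> R[i].
Hypothesis hA : is_partition g alpha A.

Lemma A_per k m : A (k + m * N%:Z) = A k.
Proof. by apply: int_per; case: hA. Qed.

Lemma A_angle k : exists a, A k = expi a /\ s k - beta < a /\ a < s k - delta + beta.
Proof.
have [hS hin] := hA.2 k.
have [t et] := @onS_expi R _ hS.
have [m [h1 h2]] := @shift_win R t (s k - beta).
exists (t + 2 * pi * m%:~R); split; first by rewrite expi_per.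
move: hin; rewrite /Pt /Qt et -(@expi_per R t m) s_pred => hin.
have hb1 := beta_lt_delta. have hb2 := beta_gt_halfdelta.
have hd := delta_gt0. have hd6 := delta_small.
have [] := @arc_oo R (s k - beta) (s k - delta + beta) (t + 2 * pi * m%:~R)
  ltac:(lra) ltac:(lra) ltac:(lra) ltac:(lra) hin; lra.
Qed.

Lemma fA_at (x : R[i]) (k0 : int) :
  in_arc_co (A k0) (A (k0 + 1)) x ->
  (forall j, in_arc_co (A j) (A (j + 1)) x -> exists m, j = k0 + m * N%:Z) ->
  fA g alpha A x = Tmap g alpha k0 x.
Proof.
move=> H1 H2; rewrite /fA; case: pickP => [j Hj | Hn].
  have [m ->] := H2 _ Hj.
  exact: (@int_per _ (fun k => Tmap g alpha k x) (fun k => Tmap_N k x) k0 m).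
exfalso.
set j0 := absz ((k0 %% N%:Z)%Z).
have hj0 : (j0 < N)%N by rewrite /j0 /Nsides; lia.
have := Hn (Ordinal hj0); rewrite /=.
have e : (j0%:Z) = k0 + (- ((k0 %/ N%:Z)%Z)) * N%:Z by rewrite /j0 /Nsides; lia.
rewrite e A_per (_ : k0 + - ((k0 %/ N%:Z)%Z) * N%:Z + 1 = (k0 + 1) + - ((k0 %/ N%:Z)%Z) * N%:Z);
  last by ring.
by rewrite A_per H1.
Qed.

Lemma P_in k : in_arc_co (A (k - 1)) (A (k - 1 + 1)) (Pt g alpha k).
Proof.
rewrite subrK.
have [a1 [e1 [h1 h1']]] := A_angle (k - 1).
have [a2 [e2 [h2 h2']]] := A_angle k.
rewrite e1 e2 /Pt /in_arc_co; apply/orP; right.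
move: h1 h1'; rewrite s_pred => h1 h1'.
have hb1 := beta_lt_delta. have hb2 := beta_gt_halfdelta.
have hd := delta_gt0. have hd6 := delta_small.
apply: arc_pos; lra.
Qed.

Lemma P_uniq k j : in_arc_co (A j) (A (j + 1)) (Pt g alpha k) ->
  exists m, j = k - 1 + m * N%:Z.
Proof.
have [a1 [e1 [h1 h1']]] := A_angle j.
have [a2 [e2 [h2 h2']]] := A_angle (j + 1).
move: h2 h2'; rewrite s_succ => h2 h2'.
have hb1 := beta_lt_delta. have hb2 := beta_gt_halfdelta.
have hd := delta_gt0. have hd6 := delta_small.
have [m [hm1 hm2]] := @shift_win R (s k - beta) a1.
rewrite e1 e2 /Pt -[expi (s k - beta)](@expi_per R _ m) => H.
have H' := @arc_co R a1 a2 (s k - beta + 2 * pi * m%:~R)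
  ltac:(lra) ltac:(lra) ltac:(lra) ltac:(lra) H.
have e : s k - beta + 2 * pi * m%:~R = s j + delta * (k + m * N%:Z - j)%:~R - beta.
  rewrite -sideangD (_ : j + (k + m * N%:Z - j) = k + m * N%:Z); last by ring.
  rewrite sideang_per; ring.
rewrite e in hm1 H'.
set d := (k + m * N%:Z - j) in hm1 H'.
have hd1 : 0 < d by rewrite -(ltr0z R); nra.
have hd2 : d < 2 by rewrite -(ltr_int R); nra.
exists m; rewrite /d in hd1 hd2; clear -hd1 hd2; lia.
Qed.

Lemma Q_in k : in_arc_co (A k) (A (k + 1)) (Qt g alpha k).
Proof.
have [a1 [e1 [h1 h1']]] := A_angle k.
have [a2 [e2 [h2 h2']]] := A_angle (k + 1).
rewrite e1 e2 /Qt s_pred /in_arc_co; apply/orP; right.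
move: h2 h2'; rewrite s_succ => h2 h2'.
have hb1 := beta_lt_delta. have hb2 := beta_gt_halfdelta.
have hd := delta_gt0. have hd6 := delta_small.
apply: arc_pos; lra.
Qed.

Lemma Q_uniq k j : in_arc_co (A j) (A (j + 1)) (Qt g alpha k) ->
  exists m, j = k + m * N%:Z.
Proof.
have [a1 [e1 [h1 h1']]] := A_angle j.
have [a2 [e2 [h2 h2']]] := A_angle (j + 1).
move: h2 h2'; rewrite s_succ => h2 h2'.
have hb1 := beta_lt_delta. have hb2 := beta_gt_halfdelta.
have hd := delta_gt0. have hd6 := delta_small.
have [m [hm1 hm2]] := @shift_win R (s k - delta + beta) a1.
rewrite e1 e2 /Qt s_pred -[expi (s k - delta + beta)](@expi_per R _ m) => H.
have H' := @arc_co R a1 a2 (s k - delta + beta + 2 * pi * m%:~R)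
  ltac:(lra) ltac:(lra) ltac:(lra) ltac:(lra) H.
have e : s k - delta + beta + 2 * pi * m%:~R = s j + delta * (k + m * N%:Z - j)%:~R - delta + beta.
  rewrite -sideangD (_ : j + (k + m * N%:Z - j) = k + m * N%:Z); last by ring.
  rewrite sideang_per; ring.
rewrite e in hm1 H'.
set d := (k + m * N%:Z - j) in hm1 H'.
have hd1 : -1 < d by rewrite -(ltr_int R); nra.
have hd2 : d < 1 by rewrite -(ltr_int R); nra.
exists m; rewrite /d in hd1 hd2; clear -hd1 hd2; lia.
Qed.

Lemma fA_P k : fA g alpha A (Pt g alpha k) = Pt g alpha (sigma g (k - 1) - 1).
Proof.
rewrite (@fA_at _ (k - 1)); [|exact: P_in|exact: P_uniq].
have -> : Pt g alpha k = Pt g alpha (k - 1 + 1) by rewrite subrK.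
by rewrite Tmap_P.
Qed.

Lemma fA_Q k : fA g alpha A (Qt g alpha k) = Qt g alpha (sigma g k + 2).
Proof.
rewrite (@fA_at _ k); [|exact: Q_in|exact: Q_uniq].
by rewrite Tmap_Q.
Qed.

End Part.

End Geo.

Close Scope complex_scope.

Theorem lemma3p4 (R : realType) (g : nat) (alpha : R) (A : int -> R[i]) :
  (2 <= g)%N ->
  is_partition g alpha A ->
  (forall k : int,
     fA g alpha A (fA g alpha A (Pt g alpha k)) = Pt g alpha k /\
     fA g alpha A (fA g alpha A (Qt g alpha k)) = Qt g alpha k) /\
  (forall k : int,
     (k %% (Nsides g)%:Z)%Z \in [:: 1%Z; (2 * g)%:Z; (4 * g - 1)%:Z; (6 * g - 2)%:Z] ->
     fA g alpha A (Pt g alpha k) = Pt g alpha k) /\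
  (forall k : int,
     (k %% (Nsides g)%:Z)%Z \in [:: 2%Z; (2 * g + 1)%:Z; (4 * g)%:Z; (6 * g - 1)%:Z] ->
     fA g alpha A (Qt g alpha k) = Qt g alpha k).
Proof.
move=> hg hA; split; [|split].
- move=> k; split.
    by rewrite !(@fA_P _ _ hg _ _ hA) sigma2P.
  by rewrite !(@fA_Q _ _ hg _ _ hA) sigma2Q.
- move=> k /(@fixP _ hg) [m hm].
  by rewrite (@fA_P _ _ hg _ _ hA) hm Pt_per.
- move=> k /(@fixQ _ hg) [m hm].
  by rewrite (@fA_Q _ _ hg _ _ hA) hm Qt_per.
Qed.
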